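(* $\mathsf{LPO}<_W\mathsf{B_F}$ and $\mathsf{LLPO}<_W\mathsf{B_I^-}$.
   Context: A represented space is a pair $(X,\delta_X)$ with $\delta_X:\subseteq\mathbb N^{\mathbb N}\to X$ a partial surjection. For a partial multi-valued map $f:\subseteq X\rightrightarrows Y$ between represented spaces, a realizer of $f$ is a partial function $F:\subseteq\mathbb N^{\mathbb N}\to\mathbb N^{\mathbb N}$ with $\delta_Y(F(p))\in f(\delta_X(p))$ for all $p\in\mathrm{dom}(f\circ\delta_X)$. We write $f\le_W g$ (Weihrauch reducibility) if there are computable partial functions $H,K:\subseteq\mathbb N^{\mathbb N}\to\mathbb N^{\mathbb N}$ such that for every realizer $G$ of $g$ the function $p\mapsto H\langle p,G(K(p))\rangle$ is a realizer of $f$, where $\langle\cdot,\cdot\rangle$ is a standard computable pairing on $\mathbb N^{\mathbb N}$. $f<_W g$ means $f\le_W g$ and $g\not\le_W f$. $\mathsf{LPO}:\mathbb N^{\mathbb N}\to\mathbb N$ maps $p$ to $0$ if $p(n)=0$ for some $n$ and to $1$ otherwise. $\mathsf{LLPO}:\subseteq\mathbb N^{\mathbb N}\rightrightarrows\mathbb N$ is defined on sequences $p$ with $p(k)\ne0$ for at most one $k$, with $0\in\mathsf{LLPO}(p)$ iff $p(2n)=0$ for all $n$ and $1\in\mathsf{LLPO}(p)$ iff $p(2n+1)=0$ for all $n$. $\mathbb R$ carries the Cauchy representation; $\mathbb R_<$ (resp. $\mathbb R_>$) is $\mathbb R$ represented by sequences of rationals with supremum (resp. infimum) the number. $\mathsf{B_F}:\mathbb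 R_<\rightrightarrows\mathbb R$, $x\mapsto[x,\infty)$. $\mathsf{B_I^-}:\subseteq\mathbb R_<\times\mathbb R_>\rightrightarrows\mathbb R$, $(x,y)\mapsto[x,y]$, defined for $x<y$. *)

(* Defs.v *)
From Stdlib Require Import Reals QArith Qreals List Arith ZArith.
Import ListNotations.
Open Scope R_scope.

Definition baire := nat -> nat.

Definition bpair (p q : baire) : baire :=
  fun k => if Nat.even k then p (Nat.div2 k) else q (Nat.div2 k).
Definition bfst (p : baire) : baire := fun n => p (2 * n)%nat.
Definition bsnd (p : baire) : baire := fun n => p (2 * n + 1)%nat.

(** * Computability: oracle (Kleene) partial recursive functions.
    A term denotes a partial function N^k -> N relative to an oracle p : baire. *)
Inductive orec : Type :=
| OZero : orec
| OSucc : orec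
| OProj : nat -> orec
| OOracle : orec
| OComp : orec -> list orec -> orec
| ORec : orec -> orec -> orec         (* primitive recursion on 1st arg  *)
| OMin : orec -> orec.

Inductive oeval (p : baire) : orec -> list nat -> nat -> Prop :=
| ev_zero : forall xs, oeval p OZero xs 0
| ev_succ : forall x, oeval p OSucc [x] (S x)
| ev_proj : forall i xs, (i < length xs)%nat -> oeval p (OProj i) xs (nth i xs 0%nat)
| ev_oracle : forall x, oeval p OOracle [x] (p x)
| ev_comp : forall f gs xs ys v,
    Forall2 (fun g y => oeval p g xs y) gs ys ->
    oeval p f ys v -> oeval p (OComp f gs) xs v
| ev_rec0 : forall f g xs v, oeval p f xs v -> oeval p (ORec f g) (0%nat :: xs) v
| ev_recS : forall f g n xs r v,
    oeval p (ORec f g) (n :: xs) r -> oeval p g (n :: r :: xs) v ->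
    oeval p (ORec f g) (S n :: xs) v
| ev_min : forall f xs n,
    oeval p f (n :: xs) 0%nat ->
    (forall m, (m < n)%nat -> exists v, oeval p f (m :: xs) (S v)) ->
    oeval p (OMin f) xs n.

Definition cfun (t : orec) (p q : baire) : Prop :=
  forall n, oeval p t [n] (q n).

(** * Represented spaces: a (partial, surjective) naming relation
    [names p x] = "p is a name of x", i.e. delta(p) = x. *)
Definition rep (X : Type) := baire -> X -> Prop.

(** Multivalued partial maps f :⊆ X ⇉ Y as relations; dom f = {x | ∃y, f x y}. *)
Definition mv (X Y : Type) := X -> Y -> Prop.

Definition realizer {X Y} (dX : rep X) (dY : rep Y) (f : mv X Y)
  (R : baire -> baire -> Prop) : Prop :=
  forall p x, dX p x -> (exists y, f x y) ->
    exists q, R p q /\ exists y, dY q y /\ f x y.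

(** Weihrauch reducibility f ≤_W g. Realizers G of g range over all partial
    functions Baire -> Baire (encoded as option-valued functions). *)
Definition W_le {X Y Z W} (dX : rep X) (dY : rep Y) (f : mv X Y)
  (dZ : rep Z) (dW : rep W) (g : mv Z W) : Prop :=
  exists H K : orec,
    forall G : baire -> option baire,
      realizer dZ dW g (fun k q => G k = Some q) ->
      realizer dX dY f
        (fun p r => exists k q, cfun K p k /\ G k = Some q /\ cfun H (bpair p q) r).

Definition W_lt {X Y Z W} (dX : rep X) (dY : rep Y) (f : mv X Y)
  (dZ : rep Z) (dW : rep W) (g : mv Z W) : Prop :=
  W_le dX dY f dZ dW g /\ ~ W_le dZ dW g dX dY f.

Definition rep_baire : rep baire := fun p x => forall n, p n = x n.
Definition rep_nat : rep nat := fun p n => p 0%nat = n.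

(** Standard numbering of the rationals (Cantor unpairing, then Z × positive). *)
Definition unpair (n : nat) : nat * nat :=
  let w := ((Nat.sqrt (8 * n + 1) - 1) / 2)%nat in
  let t := (w * (w + 1) / 2)%nat in
  let y := (n - t)%nat in
  ((w - y)%nat, y).
Definition zdec (k : nat) : Z :=
  if Nat.even k then Z.of_nat (Nat.div2 k) else (- Z.of_nat (Nat.div2 (S k)))%Z.
Definition qcode (n : nat) : Q :=
  let (a, b) := unpair n in Qmake (zdec a) (Pos.of_succ_nat b).
Definition qv (n : nat) : R := Q2R (qcode n).

Definition rep_R : rep R := fun p x => forall n, Rabs (qv (p n) - x) <= / 2 ^ n.
Definition rep_Rlt : rep R := fun p x =>
  (forall n, qv (p n) <= x) /\ (forall eps, 0 < eps -> exists n, x - eps < qv (p n)).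
Definition rep_Rgt : rep R := fun p x =>
  (forall n, x <= qv (p n)) /\ (forall eps, 0 < eps -> exists n, qv (p n) < x + eps).
Definition rep_prod {X Y} (dX : rep X) (dY : rep Y) : rep (X * Y) :=
  fun p xy => dX (bfst p) (fst xy) /\ dY (bsnd p) (snd xy).

Definition LPO : mv baire nat := fun p y =>
  ((exists n, p n = 0%nat) /\ y = 0%nat) \/ ((forall n, p n <> 0%nat) /\ y = 1%nat).

Definition LLPO : mv baire nat := fun p y =>
  (forall k l, p k <> 0%nat -> p l <> 0%nat -> k = l) /\
  ((y = 0%nat /\ forall n, p (2 * n)%nat = 0%nat) \/
   (y = 1%nat /\ forall n, p (2 * n + 1)%nat = 0%nat)).

(** B_F : R_< ⇉ R, x |-> [x, ∞). *)
Definition BF : mv R R := fun x y => x <= y.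
(** B_I^- :⊆ R_< × R_> ⇉ R, (x,y) |-> [x,y], defined for x < y. *)
Definition BIm : mv (R * R) R := fun xy z =>
  fst xy < snd xy /\ fst xy <= z <= snd xy.

(* Main.v *)
Require Import Defs.
From Stdlib Require Import Reals.
From Stdlib Require Import QArith Qreals List Arith ZArith Lia Lra.
From Stdlib Require Import Classical ClassicalEpsilon.
Import ListNotations.
Open Scope nat_scope.


Definition agree (p p' : baire) (N : nat) := forall i, (i < N)%nat -> p' i = p i.

Lemma agree_mono p p' N M : (M <= N)%nat -> agree p p' N -> agree p p' M.
Proof. intros H A i Hi. apply A. lia. Qed.

Fixpoint oeval_det p t xs v (H : oeval p t xs v) {struct H} :
  forall v', oeval p t xs v' -> v = v'.
Proof.
  destruct H; intros v' H'.
  - inversion H'; subst; auto.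
  - inversion H'; subst; auto.
  - inversion H'; subst; auto.
  - inversion H'; subst; auto.
  - inversion H'; subst.
    match goal with HH : Forall2 _ gs ?Y |- _ => match Y with ys => fail 1 | _ => rename HH into HY; rename Y into ys0 end end.
    match goal with HH : oeval p f ys0 v' |- _ => rename HH into HV end.
    assert (ys = ys0).
    { clear H' H0 HV. revert ys0 HY.
      revert gs ys H.
      fix IH2 3. intros gs ys H. destruct H; intros ys0 HY.
      + inversion HY; auto.
      + inversion HY; subst. f_equal.
        * apply (oeval_det _ _ _ _ H); auto.
        * eapply IH2; eauto. }
    subst. apply (oeval_det _ _ _ _ H0); auto.
  - inversion H'; subst. apply (oeval_det _ _ _ _ H); auto.
  - inversion H'; subst.
    assert (r = r0) by (apply (oeval_det _ _ _ _ H); auto). subst.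
    apply (oeval_det _ _ _ _ H0); auto.
  - inversion H'; subst.
    destruct (lt_eq_lt_dec n v') as [[Hl|He]|Hl]; auto.
    + match goal with HH : forall m, (m < v')%nat -> _ |- _ => destruct (HH n Hl) as [w Hw] end.
      pose proof (oeval_det _ _ _ _ H _ Hw). discriminate.
    + match goal with HH : forall m, (m < n)%nat -> _ |- _ => destruct (HH v' Hl) as [w Hw] end.
      match goal with HH : oeval p f (v' :: xs) 0 |- _ =>
      pose proof (oeval_det _ _ _ _ Hw _ HH) end. discriminate.
Qed.

Fixpoint oeval_use p t xs v (H : oeval p t xs v) {struct H} :
  exists N, forall p', agree p p' N -> oeval p' t xs v.
Proof.
  destruct H.
  - exists 0. intros. constructor.
  - exists 0. intros. constructor.
  - exists 0. intros. constructor; auto.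
  - exists (S x). intros p' A. rewrite <- (A x) by lia. constructor.
  - assert (HF : exists N, forall p', agree p p' N ->
        Forall2 (fun g y => oeval p' g xs y) gs ys).
    { clear H0. revert gs ys H. fix IH2 3. intros gs ys H. destruct H.
      + exists 0. intros. constructor.
      + destruct (oeval_use _ _ _ _ H) as [N1 HN1].
        destruct (IH2 _ _ H0) as [N2 HN2].
        exists (N1 + N2). intros p' A. constructor.
        * apply HN1. eapply agree_mono; [|eauto]; lia.
        * apply HN2. eapply agree_mono; [|eauto]; lia. }
    destruct HF as [N1 HN1].
    destruct (oeval_use _ _ _ _ H0) as [N2 HN2].
    exists (N1 + N2). intros p' A. econstructor.
    + apply HN1. eapply agree_mono; [|eauto]; lia.
    + apply HN2. eapply agree_mono; [|eauto]; lia.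
  - destruct (oeval_use _ _ _ _ H) as [N HN]. exists N. intros. constructor; auto.
  - destruct (oeval_use _ _ _ _ H) as [N1 HN1].
    destruct (oeval_use _ _ _ _ H0) as [N2 HN2].
    exists (N1 + N2). intros p' A. econstructor.
    + apply HN1. eapply agree_mono; [|eauto]; lia.
    + apply HN2. eapply agree_mono; [|eauto]; lia.
  - destruct (oeval_use _ _ _ _ H) as [N1 HN1].
    assert (HM : forall k, (k <= n)%nat -> exists N, forall p', agree p p' N ->
        forall m, (m < k)%nat -> exists v, oeval p' f (m :: xs) (S v)).
    { induction k; intros Hk.
      - exists 0. intros. lia.
      - destruct (IHk ltac:(lia)) as [Na HNa].
        match goal with HH : forall m, (m < n)%nat -> _ |- _ => destruct (HH k ltac:(lia)) as [w Hw] end.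
        destruct (oeval_use _ _ _ _ Hw) as [Nb HNb].
        exists (Na + Nb). intros p' A m Hm.
        destruct (Nat.eq_dec m k).
        + subst. exists w. apply HNb. eapply agree_mono; [|eauto]; lia.
        + apply (HNa p'). eapply agree_mono; [|eauto]; lia. lia. }
    destruct (HM n (le_n _)) as [N2 HN2].
    exists (N1 + N2). intros p' A. constructor.
    + apply HN1. eapply agree_mono; [|eauto]; lia.
    + apply HN2. eapply agree_mono; [|eauto]; lia.
Qed.


Fixpoint T n := match n with 0 => 0 | S k => T k + S k end.

Lemma T2 n : 2 * T n = n * (n + 1).
Proof. induction n; simpl T; lia. Qed.

Lemma T_mono n m : n <= m -> T n <= T m.
Proof. induction 1; simpl; lia. Qed.

Lemma unpair_T s b : b <= s -> unpair (T s + b) = (s - b, b).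
Proof.
  intros Hb. unfold unpair.
  pose proof (Nat.sqrt_spec (8 * (T s + b) + 1) ltac:(lia)) as [Sp1 Sp2].
  set (r := Nat.sqrt (8 * (T s + b) + 1)) in *.
  pose proof (T2 s).
  assert (2 * s + 1 <= r) by nia.
  assert (r <= 2 * s + 2) by nia.
  replace ((r - 1) / 2) with s.
  2:{ assert (r = 2 * s + 1 \/ r = 2 * s + 2) as [-> | ->] by lia.
      - replace (2 * s + 1 - 1) with (s * 2) by lia. rewrite Nat.div_mul; lia.
      - replace (2 * s + 2 - 1) with (1 + s * 2) by lia. rewrite Nat.div_add; simpl; lia. }
  replace (s * (s + 1) / 2) with (T s).
  2:{ rewrite <- T2. rewrite Nat.mul_comm, Nat.div_mul; lia. }
  f_equal; lia.
Qed.

Lemma decode c : exists w b, b <= w /\ c = T w + b /\ T w <= c < T (S w).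
Proof.
  induction c.
  - exists 0, 0. simpl. lia.
  - destruct IHc as [w [b [H1 [H2 H3]]]].
    destruct (Nat.eq_dec b w).
    + subst. exists (S w), 0. simpl. simpl in H3. lia.
    + exists w, (S b). simpl in *. lia.
Qed.

Lemma IZR_pos_succ b : IZR (Z.pos (Pos.of_succ_nat b)) = INR (S b).
Proof. rewrite Znat.Zpos_P_of_succ_nat, INR_IZR_INZ. f_equal. lia. Qed.

Lemma qv_eq c a b : unpair c = (a, b) -> qv c = (IZR (zdec a) / INR (S b))%R.
Proof.
  intros H. unfold qv, qcode. rewrite H. unfold Q2R. simpl.
  rewrite IZR_pos_succ. reflexivity.
Qed.

Lemma zdec_abs a : (Z.abs (zdec a) <= Z.of_nat a)%Z.
Proof.
  unfold zdec. destruct (Nat.even a) eqn:E; cbv beta iota.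
  - pose proof (Nat.le_div2_diag_l a). set (d := Nat.div2 a) in *. lia.
  - destruct a. discriminate. pose proof (Nat.le_div2 (S a)).
    set (d := Nat.div2 (S (S a))) in *. lia.
Qed.

Lemma qv_le c : (qv c <= INR c)%R.
Proof.
  destruct (decode c) as [w [b [H1 [H2 H3]]]].
  assert (E : unpair c = (w - b, b)) by (rewrite H2; apply unpair_T; auto).
  rewrite (qv_eq _ _ _ E).
  pose proof (zdec_abs (w - b)).
  assert (A : (IZR (zdec (w - b)) <= INR c)%R).
  { rewrite INR_IZR_INZ. apply IZR_le.
    assert (w <= T w) by (destruct w; simpl; [lia| pose proof (T_mono 0 w); simpl in *; lia]).
    lia. }
  assert (B : (1 <= INR (S b))%R) by (rewrite S_INR; pose proof (pos_INR b); lra).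
  assert (C : (0 <= INR c)%R) by apply pos_INR.
  destruct (Rle_or_lt 0 (IZR (zdec (w - b)))).
  - unfold Rdiv. apply Rle_trans with (IZR (zdec (w - b)) * 1)%R.
    + apply Rmult_le_compat_l; auto. rewrite <- Rinv_1. apply Rinv_le_contravar; lra.
    + lra.
  - unfold Rdiv. assert (0 < / INR (S b))%R by (apply Rinv_0_lt_compat; lra).
    assert (IZR (zdec (w - b)) * / INR (S b) < 0)%R by (apply Rmult_neg_pos; lra). lra.
Qed.

Lemma even_double n : Nat.even (2 * n) = true.
Proof. induction n. reflexivity. replace (2 * S n) with (S (S (2 * n))) by lia. simpl. auto. Qed.

Lemma div2_double n : Nat.div2 (2 * n) = n.
Proof. induction n. reflexivity. replace (2 * S n) with (S (S (2 * n))) by lia. simpl. auto. Qed.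

Lemma zdec_surj z : exists a, zdec a = z.
Proof.
  destruct (Z_le_gt_dec 0 z).
  - exists (2 * Z.to_nat z). unfold zdec. rewrite even_double, div2_double. lia.
  - exists (2 * Z.to_nat (- z) - 1). unfold zdec.
    assert (E : exists n, Z.to_nat (- z) = S n) by (exists (Z.to_nat (-z) - 1); lia).
    destruct E as [n En]. rewrite En.
    replace (2 * S n - 1) with (S (2 * n)) by lia.
    rewrite Nat.even_succ, <- Nat.negb_even, even_double. simpl negb. cbv iota.
    replace (S (S (2 * n))) with (2 * S n) by lia. rewrite div2_double. lia.
Qed.

Lemma qv_surj q : exists c, qv c = Q2R q.
Proof.
  destruct q as [z d]. destruct (zdec_surj z) as [a Ha].
  exists (T (a + (Pos.to_nat d - 1)) + (Pos.to_nat d - 1)).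
  unfold qv, qcode. rewrite unpair_T by lia.
  replace (a + (Pos.to_nat d - 1) - (Pos.to_nat d - 1)) with a by lia.
  rewrite Ha. rewrite (SuccNat2Pos.inv (Pos.to_nat d - 1) d) by lia. reflexivity.
Qed.

Lemma qv_nat m : qv (T (2 * m)) = INR m.
Proof.
  rewrite <- (Nat.add_0_r (T (2 * m))).
  rewrite (qv_eq _ (2 * m) 0) by (rewrite unpair_T; [f_equal; lia| lia]).
  unfold zdec. rewrite even_double, div2_double. simpl INR.
  rewrite INR_IZR_INZ. field.
Qed.

Lemma qv_sign c a b : unpair c = (a, b) ->
  (Nat.even a = true -> (0 <= qv c)%R) /\ (Nat.even a = false -> (qv c < 0)%R).
Proof.
  intros H. rewrite (qv_eq _ _ _ H).
  assert (B : (0 < INR (S b))%R) by (apply lt_0_INR; lia).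
  unfold zdec. split; intros E; rewrite E; cbv beta iota.
  - apply Rmult_le_pos. apply IZR_le. set (d := Nat.div2 a). lia. left. apply Rinv_0_lt_compat; auto.
  - apply Rmult_neg_pos. apply IZR_lt. destruct a. discriminate.
    pose proof (Nat.div2_le_lower_bound (S (S a)) 1).
    set (d := Nat.div2 (S (S a))) in *. lia.
    apply Rinv_0_lt_compat; auto.
Qed.

Lemma qv_code0 : qv 0 = 0%R.
Proof. unfold qv, qcode. vm_compute unpair. unfold Q2R, zdec. simpl. field. Qed.
Lemma qv_code1 : qv 1 = (-1)%R.
Proof. unfold qv, qcode. vm_compute unpair. unfold Q2R, zdec. simpl. field. Qed.
Lemma qv_code3 : qv 3 = 1%R.
Proof. unfold qv, qcode. vm_compute unpair. unfold Q2R, zdec. simpl. field. Qed.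
Lemma qv_code4 : qv 4 = (-1/2)%R.
Proof. unfold qv, qcode. vm_compute unpair. unfold Q2R, zdec. simpl. field. Qed.
Lemma qv_code7 : qv 7 = (1/2)%R.
Proof. unfold qv, qcode. vm_compute unpair. unfold Q2R, zdec. simpl. field. Qed.


Definition cb (b : nat) : baire := fun _ => b.
Definition spl (p : baire) (U c : nat) : baire := fun i => if i <? U then p i else c.

Lemma agree_spl p U c : agree p (spl p U c) U.
Proof. intros i Hi. unfold spl. destruct (Nat.ltb_spec i U); lia. Qed.

Lemma agree_refl p N : agree p p N.
Proof. intros i _; reflexivity. Qed.

Lemma agree_trans p p' p'' N : agree p p' N -> agree p' p'' N -> agree p p'' N.
Proof. intros A B i Hi. rewrite B, A; auto. Qed.

Lemma bpair_agree p p' q N : agree p p' N -> agree (bpair p q) (bpair p' q) N.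
Proof.
  intros A i Hi. unfold bpair. destruct (Nat.even i); auto.
  apply A. pose proof (Nat.le_div2_diag_l i). set (d := Nat.div2 i) in *. lia.
Qed.

Lemma large B : exists c, (B < qv c)%R.
Proof.
  destruct (INR_unbounded B) as [m Hm]. exists (T (2 * m)). rewrite qv_nat. auto.
Qed.

Lemma cfun_use t p k n : cfun t p k ->
  exists U, forall p' k', agree p p' U -> cfun t p' k' -> k' n = k n.
Proof.
  intros Hk. destruct (oeval_use _ _ _ _ (Hk n)) as [U HU]. exists U.
  intros p' k' A Hk'. symmetry. eapply oeval_det; [apply HU, A | apply Hk'].
Qed.

Lemma rep_Rlt_spl p X U c : rep_Rlt p X -> (X <= qv c)%R -> rep_Rlt (spl p U c) (qv c).
Proof.
  intros [H1 H2] Hc. split.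
  - intros n. unfold spl. destruct (n <? U). specialize (H1 n). lra. lra.
  - intros eps He. exists U. unfold spl. rewrite Nat.ltb_irrefl. lra.
Qed.

Lemma Rabs_le_inv' x a : (Rabs x <= a)%R -> (- a <= x <= a)%R.
Proof. intros H. unfold Rabs in H. destruct (Rcase_abs x); lra. Qed.

Definition bitP (k : baire) : nat :=
  if excluded_middle_informative (exists n, k n = 0) then 0 else 1.

Lemma BF_not_le_LPO : ~ W_le rep_Rlt rep_R BF rep_baire rep_nat LPO.
Proof.
  intros [H [K Hred]].
  specialize (Hred (fun k => Some (cb (bitP k)))).
  assert (HG : realizer rep_baire rep_nat LPO (fun k q => Some (cb (bitP k)) = Some q)).
  { intros p x Hp _. exists (cb (bitP p)). split; auto. exists (bitP p). split.
    reflexivity. unfold bitP, LPO.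
    destruct (excluded_middle_informative _) as [[n Hn]|Hn].
    - left. split; auto. exists n. rewrite <- Hp. auto.
    - right. split; auto. intros n E. apply Hn. exists n. rewrite Hp. auto. }
  specialize (Hred HG). clear HG.
  assert (HR : forall p X, rep_Rlt p X -> exists k r y, cfun K p k /\
      cfun H (bpair p (cb (bitP k))) r /\ rep_R r y /\ (X <= y)%R).
  { intros p X Hp. destruct (Hred p X Hp) as [r [[k [q [Hk [Hq Hr]]]] [y [Hy Hxy]]]].
    exists X. unfold BF. lra.
    injection Hq as <-. exists k, r, y. auto. }
  clear Hred.
  assert (Forced : forall p k j, cfun K p k -> k j = 0 -> exists L, forall p' k',
      agree p p' L -> cfun K p' k' -> bitP k' = 0).
  { intros p k j Hk Hj. destruct (cfun_use _ _ _ j Hk) as [L HL]. exists L.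
    intros p' k' A Hk'. unfold bitP. destruct (excluded_middle_informative _) as [_|N]; auto.
    exfalso. apply N. exists j. rewrite (HL p' k'); auto. }
  assert (Step : forall p X b r L, rep_Rlt p X -> cfun H (bpair p (cb b)) r ->
      exists p' X', rep_Rlt p' X' /\ agree p p' L /\ forall r' y',
        cfun H (bpair p' (cb b)) r' -> rep_R r' y' -> (X' <= y')%R -> False).
  { intros p X b r L Hp Hr. destruct (cfun_use _ _ _ 0 Hr) as [U HU].
    destruct (large (Rmax X (qv (r 0) + 1))) as [c Hc].
    pose proof (Rmax_l X (qv (r 0) + 1)). pose proof (Rmax_r X (qv (r 0) + 1)).
    exists (spl p (L + U) c), (qv c). split; [|split].
    - apply rep_Rlt_spl with X; auto. lra.
    - eapply agree_mono; [|apply agree_spl]. lia.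
    - intros r' y' Hr' Hy' Hle. specialize (Hy' 0).
      rewrite (HU (bpair (spl p (L + U) c) (cb b)) r') in Hy'; auto.
      + simpl in Hy'. rewrite Rinv_1 in Hy'. apply Rabs_le_inv' in Hy'. lra.
      + apply bpair_agree. eapply agree_mono; [|apply agree_spl]. lia. }
  assert (CaseF : forall p X L, rep_Rlt p X -> (forall p' k', agree p p' L ->
      cfun K p' k' -> bitP k' = 0) -> False).
  { intros p X L Hp HF. destruct (HR p X Hp) as [k [r [y [Hk [Hr _]]]]].
    rewrite (HF p k (agree_refl _ _) Hk) in Hr.
    destruct (Step p X 0 r L Hp Hr) as [p' [X' [Hp' [A Hc]]]].
    destruct (HR p' X' Hp') as [k' [r' [y' [Hk' [Hr' [Hy' Hle]]]]]].
    rewrite (HF p' k' A Hk') in Hr'. eapply Hc; eauto. }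
  set (p0 := fun _ : nat => 0).
  assert (H0 : rep_Rlt p0 0%R).
  { split. intros; unfold p0; rewrite qv_code0; lra.
    intros eps He. exists 0. unfold p0. rewrite qv_code0. lra. }
  destruct (HR p0 0%R H0) as [k0 [r0 [y0 [Hk0 [Hr0 _]]]]].
  destruct (classic (exists j, k0 j = 0)) as [[j Hj]|Nz].
  - destruct (Forced _ _ _ Hk0 Hj) as [L HL]. eapply CaseF; eauto.
  - assert (B0 : bitP k0 = 1).
    { unfold bitP. destruct (excluded_middle_informative _); tauto. }
    rewrite B0 in Hr0.
    destruct (Step p0 0%R 1 r0 0 H0 Hr0) as [p1 [X1 [Hp1 [_ Hc]]]].
    destruct (HR p1 X1 Hp1) as [k1 [r1 [y1 [Hk1 [Hr1 [Hy1 Hle]]]]]].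
    destruct (classic (exists j, k1 j = 0)) as [[j Hj]|Nz1].
    + destruct (Forced _ _ _ Hk1 Hj) as [L HL]. eapply CaseF; eauto.
    + assert (B1 : bitP k1 = 1).
      { unfold bitP. destruct (excluded_middle_informative _); tauto. }
      rewrite B1 in Hr1. eapply Hc; eauto.
Qed.


Definition spl2 (p : baire) (U cx cy : nat) : baire :=
  fun i => if i <? U then p i else if Nat.even i then cx else cy.

Lemma agree_spl2 p U cx cy : agree p (spl2 p U cx cy) U.
Proof. intros i Hi. unfold spl2. destruct (Nat.ltb_spec i U); lia. Qed.

Lemma even_odd n : Nat.even (2 * n + 1) = false.
Proof. rewrite Nat.add_1_r, Nat.even_succ, <- Nat.negb_even, even_double. reflexivity. Qed.

Lemma rep_Rlt_spl2 p X U cx cy : rep_Rlt (bfst p) X -> (X <= qv cx)%R ->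
  rep_Rlt (bfst (spl2 p U cx cy)) (qv cx).
Proof.
  intros [H1 H2] Hc. unfold bfst, spl2. split.
  - intros n. rewrite even_double. destruct (2 * n <? U). specialize (H1 n). unfold bfst in H1. lra. lra.
  - intros eps He. exists U. rewrite even_double.
    destruct (Nat.ltb_spec (2 * U) U). lia. lra.
Qed.

Lemma rep_Rgt_spl2 p Y U cx cy : rep_Rgt (bsnd p) Y -> (qv cy <= Y)%R ->
  rep_Rgt (bsnd (spl2 p U cx cy)) (qv cy).
Proof.
  intros [H1 H2] Hc. unfold bsnd, spl2. split.
  - intros n. rewrite even_odd. destruct (2 * n + 1 <? U). specialize (H1 n). unfold bsnd in H1. lra. lra.
  - intros eps He. exists U. rewrite even_odd.
    destruct (Nat.ltb_spec (2 * U + 1) U). lia. lra.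
Qed.

Lemma INR_lt_pow n : (INR n < 2 ^ n)%R.
Proof.
  induction n. simpl. lra. rewrite S_INR. simpl.
  assert (1 <= 2 ^ n)%R by (clear IHn; induction n; simpl; lra). lra.
Qed.

Lemma small_pow w : (0 < w)%R -> exists N, (/ 2 ^ N < w)%R.
Proof.
  intros Hw. destruct (INR_unbounded (/ w)) as [m Hm]. exists m.
  pose proof (INR_lt_pow m).
  assert (0 < / w)%R by (apply Rinv_0_lt_compat; auto).
  assert (0 < 2 ^ m)%R by lra.
  rewrite <- (Rinv_inv w). apply Rinv_lt_contravar. nra. lra.
Qed.

Lemma qv_affine cx cy (a : Q) : exists c, qv c = (qv cx + Q2R a * (qv cy - qv cx))%R.
Proof.
  destruct (qv_surj (qcode cx + a * (qcode cy - qcode cx))%Q) as [c Hc].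
  exists c. rewrite Hc. unfold qv. rewrite Q2R_plus, Q2R_mult, Q2R_minus. reflexivity.
Qed.

Lemma Q2R_34 : Q2R (3 # 4) = (3/4)%R.
Proof. unfold Q2R. simpl. field. Qed.
Lemma Q2R_14 : Q2R (1 # 4) = (1/4)%R.
Proof. unfold Q2R. simpl. field. Qed.

Definition bitL (k : baire) : nat :=
  if excluded_middle_informative (forall n, k (2 * n) = 0) then 0 else 1.

Definition InvI p cx cy :=
  rep_prod rep_Rlt rep_Rgt p (qv cx, qv cy) /\ (qv cx < qv cy)%R.

Lemma BIm_not_le_LLPO :
  ~ W_le (rep_prod rep_Rlt rep_Rgt) rep_R BIm rep_baire rep_nat LLPO.
Proof.
  intros [H [K Hred]].
  specialize (Hred (fun k => Some (cb (bitL k)))).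
  assert (HG : realizer rep_baire rep_nat LLPO (fun k q => Some (cb (bitL k)) = Some q)).
  { intros p x Hp [y0 [Huniq _]]. exists (cb (bitL p)). split; auto. exists (bitL p). split.
    reflexivity. unfold bitL, LLPO. split; auto.
    destruct (excluded_middle_informative _) as [Hn|Hn].
    - left. split; auto. intros n. rewrite <- Hp. auto.
    - right. split; auto. apply not_all_ex_not in Hn. destruct Hn as [m Hm].
      intros n. destruct (Nat.eq_dec (x (2 * n + 1)) 0) as [E|E]; auto.
      exfalso. rewrite Hp in Hm. pose proof (Huniq _ _ Hm E). lia. }
  specialize (Hred HG). clear HG.
  assert (HR : forall p X Y, rep_prod rep_Rlt rep_Rgt p (X, Y) -> (X < Y)%R ->
      exists k r z, cfun K p k /\
      cfun H (bpair p (cb (bitL k))) r /\ rep_R r z /\ (X <= z <= Y)%R).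
  { intros p X Y Hp Hxy. destruct (Hred p (X, Y) Hp) as [r [[k [q [Hk [Hq Hr]]]] [z [Hz Hb]]]].
    exists X. unfold BIm. simpl. lra.
    injection Hq as <-. exists k, r, z. unfold BIm in Hb. simpl in Hb. intuition. }
  clear Hred.
  assert (Forced : forall p k j, cfun K p k -> k (2 * j) <> 0 -> exists L, forall p' k',
      agree p p' L -> cfun K p' k' -> bitL k' = 1).
  { intros p k j Hk Hj. destruct (cfun_use _ _ _ (2 * j) Hk) as [L HL]. exists L.
    intros p' k' A Hk'. unfold bitL. destruct (excluded_middle_informative _) as [N|_]; auto.
    exfalso. apply Hj. rewrite <- (HL p' k'); auto. }
  assert (Step : forall p cx cy b r L, InvI p cx cy -> cfun H (bpair p (cb b)) r ->
      exists p' cx' cy', InvI p' cx' cy' /\ agree p p' L /\ forall r' z,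
        cfun H (bpair p' (cb b)) r' -> rep_R r' z -> (qv cx' <= z <= qv cy')%R -> False).
  { intros p cx cy b r L [[Hx Hy] Hxy] Hr. simpl in Hx, Hy.
    set (X := qv cx) in *. set (Y := qv cy) in *.
    destruct (small_pow ((Y - X) / 4)) as [N HN]. lra.
    destruct (cfun_use _ _ _ N Hr) as [U HU].
    set (c := qv (r N)).
    assert (Hpos : (0 < 2 ^ N)%R) by (apply pow_lt; lra).
    assert (Hipos : (0 < / 2 ^ N)%R) by (apply Rinv_0_lt_compat; auto).
    destruct (Rle_or_lt c ((X + Y) / 2)) as [Hc|Hc].
    - destruct (qv_affine cx cy (3 # 4)) as [cx' Hcx']. rewrite Q2R_34 in Hcx'.
      exists (spl2 p (L + U) cx' cy), cx', cy. split; [split; [split|]|split].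
      + simpl. apply rep_Rlt_spl2 with X; auto. fold X Y in Hcx'. lra.
      + simpl. apply rep_Rgt_spl2 with Y; auto. fold Y; lra.
      + fold X Y in Hcx'. fold Y. lra.
      + eapply agree_mono; [|apply agree_spl2]. lia.
      + intros r' z Hr' Hz Hb. specialize (Hz N).
        rewrite (HU (bpair (spl2 p (L + U) cx' cy) (cb b)) r') in Hz; auto.
        * fold c in Hz. apply Rabs_le_inv' in Hz. fold X Y in Hcx'. fold Y in Hb. lra.
        * apply bpair_agree. eapply agree_mono; [|apply agree_spl2]. lia.
    - destruct (qv_affine cx cy (1 # 4)) as [cy' Hcy']. rewrite Q2R_14 in Hcy'.
      exists (spl2 p (L + U) cx cy'), cx, cy'. split; [split; [split|]|split].
      + simpl. apply rep_Rlt_spl2 with X; auto. fold X. lra.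
      + simpl. apply rep_Rgt_spl2 with Y; auto. fold X Y in Hcy'. lra.
      + fold X Y in Hcy'. fold X. lra.
      + eapply agree_mono; [|apply agree_spl2]. lia.
      + intros r' z Hr' Hz Hb. specialize (Hz N).
        rewrite (HU (bpair (spl2 p (L + U) cx cy') (cb b)) r') in Hz; auto.
        * fold c in Hz. apply Rabs_le_inv' in Hz. fold X Y in Hcy'. fold X in Hb. lra.
        * apply bpair_agree. eapply agree_mono; [|apply agree_spl2]. lia. }
  assert (CaseF : forall p cx cy L, InvI p cx cy -> (forall p' k', agree p p' L ->
      cfun K p' k' -> bitL k' = 1) -> False).
  { intros p cx cy L Hp HF. destruct (HR p _ _ (proj1 Hp) (proj2 Hp)) as [k [r [z [Hk [Hr _]]]]].
    rewrite (HF p k (agree_refl _ _) Hk) in Hr.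
    destruct (Step p cx cy 1 r L Hp Hr) as [p' [cx' [cy' [Hp' [A Hc]]]]].
    destruct (HR p' _ _ (proj1 Hp') (proj2 Hp')) as [k' [r' [z' [Hk' [Hr' [Hz' Hle]]]]]].
    rewrite (HF p' k' A Hk') in Hr'. eapply Hc; eauto. }
  set (p0 := fun i : nat => if Nat.even i then 1 else 3).
  assert (H0 : InvI p0 1 3).
  { split; [split|]; simpl; unfold bfst, bsnd, p0.
    - rewrite qv_code1. split. intros; rewrite even_double, qv_code1; lra.
      intros eps He. exists 0. simpl. rewrite qv_code1. lra.
    - rewrite qv_code3. split. intros; rewrite even_odd, qv_code3; lra.
      intros eps He. exists 0. simpl. rewrite qv_code3. lra.
    - rewrite qv_code1, qv_code3. lra. }
  destruct (HR p0 _ _ (proj1 H0) (proj2 H0)) as [k0 [r0 [z0 [Hk0 [Hr0 _]]]]].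
  destruct (classic (exists j, k0 (2 * j) <> 0)) as [[j Hj]|Nz].
  - destruct (Forced _ _ _ Hk0 Hj) as [L HL]. eapply CaseF; eauto.
  - assert (B0 : bitL k0 = 0).
    { unfold bitL. destruct (excluded_middle_informative _) as [_|N]; auto.
      exfalso. apply N. intros n. apply NNPP. intros E. apply Nz. eauto. }
    rewrite B0 in Hr0.
    destruct (Step p0 1 3 0 r0 0 H0 Hr0) as [p1 [cx1 [cy1 [Hp1 [_ Hc]]]]].
    destruct (HR p1 _ _ (proj1 Hp1) (proj2 Hp1)) as [k1 [r1 [z1 [Hk1 [Hr1 [Hz1 Hle]]]]]].
    destruct (classic (exists j, k1 (2 * j) <> 0)) as [[j Hj]|Nz1].
    + destruct (Forced _ _ _ Hk1 Hj) as [L HL]. eapply CaseF; eauto.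
    + assert (B1 : bitL k1 = 0).
      { unfold bitL. destruct (excluded_middle_informative _) as [_|N]; auto.
        exfalso. apply N. intros n. apply NNPP. intros E. apply Nz1. eauto. }
      rewrite B1 in Hr1. eapply Hc; eauto.
Qed.



Lemma comp1 (p : baire) f g xs a v : oeval p g xs a -> oeval p f [a] v -> oeval p (OComp f [g]) xs v.
Proof. intros. econstructor; eauto. Qed.
Lemma comp2 (p : baire) f g1 g2 xs a1 a2 v : oeval p g1 xs a1 -> oeval p g2 xs a2 ->
  oeval p f [a1; a2] v -> oeval p (OComp f [g1; g2]) xs v.
Proof. intros. econstructor; eauto. Qed.
Lemma comp3 (p : baire) f g1 g2 g3 xs a1 a2 a3 v : oeval p g1 xs a1 -> oeval p g2 xs a2 ->
  oeval p g3 xs a3 -> oeval p f [a1; a2; a3] v -> oeval p (OComp f [g1; g2; g3]) xs v.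
Proof. intros. econstructor; eauto. Qed.

Lemma rec_ok (p : baire) f g xs (F : nat -> nat) : oeval p f xs (F 0) ->
  (forall n, oeval p g (n :: F n :: xs) (F (S n))) -> forall n, oeval p (ORec f g) (n :: xs) (F n).
Proof. intros H0 HS n. induction n. constructor; auto. econstructor; eauto. Qed.

Lemma min_ok (p : baire) f xs (F : nat -> nat) n : (forall m, oeval p f (m :: xs) (F m)) -> F n = 0 ->
  (forall m, m < n -> F m <> 0) -> oeval p (OMin f) xs n.
Proof.
  intros HF Hn Hm. constructor. rewrite <- Hn. auto.
  intros m Hlt. destruct (F m) eqn:E. exfalso; eapply Hm; eauto. exists n0. rewrite <- E. auto.
Qed.

Lemma proj_ok (p : baire) i xs : i < length xs -> oeval p (OProj i) xs (nth i xs 0).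
Proof. intros. constructor; auto. Qed.

Fixpoint const (k : nat) : orec := match k with 0 => OZero | S k => OComp OSucc [const k] end.
Lemma const_ok (p : baire) k xs : oeval p (const k) xs k.
Proof. induction k. constructor. simpl. eapply comp1; eauto. constructor. Qed.

Definition Sel := ORec (OProj 0) (OProj 3).
Lemma sel_ok (p : baire) c a b : oeval p Sel [c; a; b] (if c =? 0 then a else b).
Proof.
  apply (rec_ok p _ _ [a; b] (fun c => if c =? 0 then a else b)).
  - apply (proj_ok p 0 [a; b]). simpl; lia.
  - intros n. apply (proj_ok p 3 [_; _; a; b]). simpl; lia.
Qed.

Definition IFZ c a b := OComp Sel [c; a; b].
Lemma ifz_ok (p : baire) c a b xs vc va vb : oeval p c xs vc -> oeval p a xs va -> oeval p b xs vb ->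
  oeval p (IFZ c a b) xs (if vc =? 0 then va else vb).
Proof. intros. eapply comp3; eauto. apply sel_ok. Qed.

Definition ADD := ORec (OProj 0) (OComp OSucc [OProj 1]).
Lemma add_ok (p : baire) a b : oeval p ADD [a; b] (a + b).
Proof.
  apply (rec_ok p _ _ [b] (fun a => a + b)).
  - apply (proj_ok p 0 [b]). simpl; lia.
  - intros n. eapply comp1. apply (proj_ok p 1 [_; _; b]). simpl; lia. constructor.
Qed.

Definition TT := ORec OZero (OComp ADD [OProj 1; OComp OSucc [OProj 0]]).
Lemma tt_ok (p : baire) s : oeval p TT [s] (T s).
Proof.
  apply (rec_ok p _ _ [] T). constructor.
  intros n. eapply comp2. apply (proj_ok p 1 [_; _]). simpl; lia.
  eapply comp1. apply (proj_ok p 0 [_; _]). simpl; lia. constructor. apply add_ok.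
Qed.

Definition DBL := OComp ADD [OProj 0; OProj 0].
Lemma dbl_ok (p : baire) j : oeval p DBL [j] (j + j).
Proof. eapply comp2; try apply (proj_ok p 0 [j]); simpl; try lia. apply add_ok. Qed.

Definition PRED := ORec OZero (OProj 0).
Lemma pred_ok (p : baire) x : oeval p PRED [x] (Nat.pred x).
Proof.
  apply (rec_ok p _ _ [] Nat.pred). constructor.
  intros n. apply (proj_ok p 0 [_; _]). simpl; lia.
Qed.

Definition SUB := ORec (OProj 0) (OComp PRED [OProj 1]).
Lemma sub_ok (p : baire) y x : oeval p SUB [y; x] (x - y).
Proof.
  apply (rec_ok p _ _ [x] (fun y => x - y)).
  - rewrite Nat.sub_0_r. apply (proj_ok p 0 [x]). simpl; lia.
  - intros n. eapply comp1. apply (proj_ok p 1 [_; _; _]). simpl; lia.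
    replace (x - S n) with (Nat.pred (x - n)) by lia. apply pred_ok.
Qed.

Definition PAR := ORec OZero (IFZ (OProj 1) (const 1) OZero).
Lemma par_ok (p : baire) a : oeval p PAR [a] (if Nat.even a then 0 else 1).
Proof.
  apply (rec_ok p _ _ [] (fun a => if Nat.even a then 0 else 1)). constructor.
  intros n. rewrite Nat.even_succ, <- Nat.negb_even.
  replace (if negb (Nat.even n) then 0 else 1) with
    (if (if Nat.even n then 0 else 1) =? 0 then 1 else 0) by (destruct (Nat.even n); auto).
  apply ifz_ok. apply (proj_ok p 1 [_; _]). simpl; lia. apply const_ok. constructor.
Qed.



Fixpoint zf (p : baire) n := match n with
  | 0 => if p 0 =? 0 then 1 else 0
  | S m => if zf p m =? 0 then (if p (S m) =? 0 then S (S m) else 0) else zf p m end.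

Definition ZP := ORec (IFZ (OComp OOracle [OZero]) (const 1) OZero)
  (IFZ (OProj 1) (IFZ (OComp OOracle [OComp OSucc [OProj 0]])
                      (OComp OSucc [OComp OSucc [OProj 0]]) OZero) (OProj 1)).

Lemma zp_ok p n : oeval p ZP [n] (zf p n).
Proof.
  apply (rec_ok _ _ _ [] (zf p)).
  - simpl. apply ifz_ok. eapply comp1. constructor. constructor. apply (const_ok _ 1). constructor.
  - intros m. simpl. apply ifz_ok.
    + apply (proj_ok _ 1 [_; _]). simpl; lia.
    + apply ifz_ok. eapply comp1. eapply comp1. apply (proj_ok _ 0 [_; _]). simpl; lia.
      constructor. constructor.
      eapply comp1. eapply comp1. apply (proj_ok _ 0 [_; _]). simpl; lia.
      constructor. constructor. constructor.
    + apply (proj_ok _ 1 [_; _]). simpl; lia.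
Qed.

Definition KP := OComp TT [OComp DBL [ZP]].
Lemma kp_ok p : cfun KP p (fun n => T (zf p n + zf p n)).
Proof. intros n. eapply comp1. eapply comp1. apply zp_ok. apply dbl_ok. apply tt_ok. Qed.

Fixpoint Pf (o : baire) j := match j with
  | 0 => if o 0 =? 0 then 0 else 1
  | S i => if o (S i + S i) =? 0 then 0 else Pf o i end.

Definition HP := OComp (ORec (IFZ (OComp OOracle [OZero]) OZero (const 1))
   (IFZ (OComp OOracle [OComp DBL [OComp OSucc [OProj 0]]]) OZero (OProj 1)))
   [OComp OSucc [OComp OOracle [const 1]]].

Lemma hp_ok o : cfun HP o (fun _ => Pf o (S (o 1))).
Proof.
  intros n. eapply comp1. eapply comp1. eapply comp1. apply (const_ok _ 1). constructor. constructor.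
  apply (rec_ok _ _ _ [] (Pf o)).
  - simpl. apply ifz_ok. eapply comp1. constructor. constructor. constructor. apply (const_ok _ 1).
  - intros m. simpl. apply ifz_ok.
    + eapply comp1. eapply comp1. eapply comp1. apply (proj_ok _ 0 [_; _]). simpl; lia.
      constructor. apply dbl_ok. constructor.
    + constructor.
    + apply (proj_ok _ 1 [_; _]). simpl; lia.
Qed.

Lemma Pf_found o B j : j <= B -> o (j + j) = 0 -> Pf o B = 0.
Proof.
  induction B; intros Hj Ho; cbn [Pf].
  - assert (j = 0) by lia. subst. simpl in Ho. rewrite Ho. auto.
  - destruct (Nat.eq_dec j (S B)). subst. rewrite Ho. auto.
    destruct (o (S B + S B) =? 0); auto. apply IHB; auto. lia.
Qed.

Lemma Pf_none o B : (forall j, j <= B -> o (j + j) <> 0) -> Pf o B = 1.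
Proof.
  induction B; intros H; cbn [Pf].
  - specialize (H 0 (le_n _)). simpl in H. destruct (Nat.eqb_spec (o 0) 0); tauto.
  - destruct (Nat.eqb_spec (o (S B + S B)) 0). exfalso; eapply H; eauto.
    apply IHB. intros; apply H; lia.
Qed.

Lemma zf_none p n : (forall j, j <= n -> p j <> 0) -> zf p n = 0.
Proof.
  induction n; intros H; simpl.
  - destruct (Nat.eqb_spec (p 0) 0); auto. exfalso; eapply H; eauto.
  - rewrite IHn by (intros; apply H; lia). simpl.
    destruct (Nat.eqb_spec (p (S n)) 0); auto. exfalso; eapply H; eauto.
Qed.

Lemma zf_first p m : p m = 0 -> (forall j, j < m -> p j <> 0) ->
  forall n, (n < m -> zf p n = 0) /\ (m <= n -> zf p n = S m).
Proof.
  intros Hm Hj n. induction n.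
  - split; intros. apply zf_none. intros; apply Hj; lia.
    assert (m = 0) by lia. subst. simpl. rewrite Hm. auto.
  - destruct IHn as [IH1 IH2]. split; intros H.
    + apply zf_none. intros; apply Hj; lia.
    + simpl. destruct (Nat.eq_dec m (S n)).
      * subst. rewrite IH1 by lia. simpl. rewrite Hm. auto.
      * rewrite IH2 by lia. auto.
Qed.

Lemma first_zero (p : baire) n : p n = 0 -> exists m, p m = 0 /\ forall j, j < m -> p j <> 0.
Proof.
  induction n as [n IH] using lt_wf_ind. intros Hn.
  destruct (classic (exists j, j < n /\ p j = 0)) as [[j [Hj1 Hj2]]|N].
  - apply (IH j); auto.
  - exists n. split; auto. intros j Hj E. apply N. eauto.
Qed.

Lemma bpair_even p q j : bpair p q (j + j) = p j.
Proof. unfold bpair. replace (j + j) with (2 * j) by lia. rewrite even_double, div2_double. auto. Qed.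

Lemma LPO_le_BF : W_le rep_baire rep_nat LPO rep_Rlt rep_R BF.
Proof.
  exists HP, KP. intros G HG p x Hp _.
  set (k := fun n => T (zf p n + zf p n)).
  assert (Hk : cfun KP p k) by apply kp_ok.
  assert (Hqk : forall n, qv (k n) = INR (zf p n)).
  { intros n. unfold k. replace (zf p n + zf p n) with (2 * zf p n) by lia. apply qv_nat. }
  destruct (classic (exists n, p n = 0)) as [[n0 Hn0]|Nz].
  - destruct (first_zero p n0 Hn0) as [m [Hm Hj]].
    pose proof (zf_first p m Hm Hj) as Z.
    assert (HX : rep_Rlt k (INR (S m))).
    { split.
      - intros n. rewrite Hqk. destruct (le_lt_dec m n).
        + rewrite (proj2 (Z n)); auto. lra.
        + rewrite (proj1 (Z n)); auto. pose proof (pos_INR m). rewrite S_INR. simpl. lra.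
      - intros eps He. exists m. rewrite Hqk, (proj2 (Z m)); auto. lra. }
    destruct (HG k _ HX) as [q [Hq [y [Hy Hxy]]]]. exists (INR (S m)). unfold BF. lra.
    exists (fun _ => Pf (bpair p q) (S (bpair p q 1))). split.
    + exists k, q. split; auto. split; auto. apply hp_ok.
    + exists (Pf (bpair p q) (S (bpair p q 1))). split. reflexivity.
      assert (E1 : bpair p q 1 = q 0) by reflexivity. rewrite E1.
      unfold BF in Hxy. specialize (Hy 0). simpl in Hy. rewrite Rinv_1 in Hy.
      apply Rabs_le_inv' in Hy. pose proof (qv_le (q 0)).
      assert (INR m < INR (S (q 0%nat)))%R by (rewrite !S_INR in *; lra).
      apply INR_lt in H0.
      rewrite (Pf_found _ _ m); [|lia|rewrite bpair_even; auto].
      left. split; auto. exists m. rewrite <- Hp. auto.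
  - assert (HX : rep_Rlt k 0%R).
    { assert (forall n, zf p n = 0) by (intros; apply zf_none; intros j _ E; apply Nz; eauto).
      split.
      - intros n. rewrite Hqk, H. simpl. lra.
      - intros eps He. exists 0. rewrite Hqk, H. simpl. lra. }
    destruct (HG k _ HX) as [q [Hq [y [Hy Hxy]]]]. exists 0%R. unfold BF. lra.
    exists (fun _ => Pf (bpair p q) (S (bpair p q 1))). split.
    + exists k, q. split; auto. split; auto. apply hp_ok.
    + exists (Pf (bpair p q) (S (bpair p q 1))). split. reflexivity.
      rewrite Pf_none. right. split; auto. intros n E. apply Nz. exists n. rewrite Hp. auto.
      intros j _. rewrite bpair_even. intros E; apply Nz; eauto.
Qed.


Definition tagf m := if (if Nat.even m then 0 else 1) =? 0 then 2 else 1.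

Fixpoint ff (p : baire) n := match n with
  | 0 => if p 0 =? 0 then 0 else 2
  | S m => if ff p m =? 0 then (if p (S m) =? 0 then 0 else tagf (S m)) else ff p m end.

Definition TAG := IFZ (OComp PAR [OComp OSucc [OProj 0]]) (const 2) (const 1).
Definition FF := ORec (IFZ (OComp OOracle [OZero]) OZero (const 2))
  (IFZ (OProj 1) (IFZ (OComp OOracle [OComp OSucc [OProj 0]]) OZero TAG) (OProj 1)).

Lemma ff_ok p n : oeval p FF [n] (ff p n).
Proof.
  apply (rec_ok _ _ _ [] (ff p)).
  - simpl. apply ifz_ok. eapply comp1. constructor. constructor. constructor. apply (const_ok _ 2).
  - intros m. simpl. apply ifz_ok.
    + apply (proj_ok _ 1 [_; _]). simpl; lia.
    + apply ifz_ok. eapply comp1. eapply comp1. apply (proj_ok _ 0 [_; _]). simpl; lia.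
      constructor. constructor. constructor.
      unfold tagf. apply ifz_ok. eapply comp1. eapply comp1. apply (proj_ok _ 0 [_; _]). simpl; lia.
      constructor. apply par_ok. apply (const_ok _ 2). apply (const_ok _ 1).
    + apply (proj_ok _ 1 [_; _]). simpl; lia.
Qed.

Definition KL := IFZ (OComp PAR [OProj 0])
  (IFZ FF (const 1) (IFZ (OComp PRED [FF]) (const 7) (const 1)))
  (IFZ FF (const 3) (IFZ (OComp PRED [FF]) (const 3) (const 4))).

Definition kL p i :=
  if (if Nat.even i then 0 else 1) =? 0 then
    (if ff p i =? 0 then 1 else if Nat.pred (ff p i) =? 0 then 7 else 1)
  else (if ff p i =? 0 then 3 else if Nat.pred (ff p i) =? 0 then 3 else 4).

Lemma kl_ok p : cfun KL p (kL p).
Proof.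
  intros i. unfold kL, KL. apply ifz_ok.
  - eapply comp1. apply (proj_ok _ 0 [_]). simpl; lia. apply par_ok.
  - apply ifz_ok. apply ff_ok. apply (const_ok _ 1). apply ifz_ok.
    eapply comp1. apply ff_ok. apply pred_ok. apply (const_ok _ 7). apply (const_ok _ 1).
  - apply ifz_ok. apply ff_ok. apply (const_ok _ 3). apply ifz_ok.
    eapply comp1. apply ff_ok. apply pred_ok. apply (const_ok _ 3). apply (const_ok _ 4).
Qed.

Lemma ff_allzero p n : (forall j, p j = 0) -> ff p n = 0.
Proof. intros H. induction n; simpl. rewrite H; auto. rewrite IHn. simpl. rewrite H. auto. Qed.

Lemma ff_one p j : p j <> 0 -> (forall k l, p k <> 0 -> p l <> 0 -> k = l) ->
  forall n, (n < j -> ff p n = 0) /\ (j <= n -> ff p n = if Nat.even j then 2 else 1).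
Proof.
  intros Hj U. assert (Z : forall i, i <> j -> p i = 0).
  { intros i Hi. destruct (Nat.eq_dec (p i) 0) as [e|e]; [exact e|]. exfalso. apply Hi. apply U; auto. }
  intros n. induction n.
  - split; intros H. simpl. rewrite Z by lia. auto.
    assert (j = 0) by lia. subst. simpl. destruct (Nat.eqb_spec (p 0) 0). tauto. auto.
  - destruct IHn as [IH1 IH2]. split; intros H.
    + simpl. rewrite IH1 by lia. rewrite Z by lia. auto.
    + cbn [ff]. destruct (Nat.eq_dec j (S n)).
      * subst. rewrite IH1 by lia. rewrite Nat.eqb_refl. destruct (Nat.eqb_spec (p (S n)) 0). tauto.
        unfold tagf. destruct (Nat.even (S n)); auto.
      * rewrite IH2 by lia. destruct (Nat.even j); auto.
Qed.

Definition HLP := OComp PAR [OComp SUB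
  [OComp SUB [OComp TT [OComp (OMin (OComp SUB [OComp TT [OComp OSucc [OProj 0]]; OComp OSucc [OProj 1]])) [OComp OOracle [const 5]]];
              OComp OOracle [const 5]];
   OComp (OMin (OComp SUB [OComp TT [OComp OSucc [OProj 0]]; OComp OSucc [OProj 1]])) [OComp OOracle [const 5]]]].

Lemma hl_ok o : cfun HLP o (fun _ => if Nat.even (fst (unpair (o 5))) then 0 else 1).
Proof.
  intros n. set (c := o 5).
  destruct (decode c) as [w [b [H1 [H2 H3]]]].
  assert (E : unpair c = (w - b, b)) by (rewrite H2; apply unpair_T; auto).
  rewrite E. simpl fst.
  assert (HW : oeval o (OComp (OMin (OComp SUB [OComp TT [OComp OSucc [OProj 0]]; OComp OSucc [OProj 1]])) [OComp OOracle [const 5]]) [n] w).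
  { eapply comp1. eapply comp1. apply (const_ok _ 5). constructor.
    apply (min_ok _ _ _ (fun m => S c - T (S m))).
    - intros m. eapply comp2. eapply comp1. eapply comp1. apply (proj_ok _ 0 [_; _]). simpl; lia.
      constructor. apply tt_ok. eapply comp1. apply (proj_ok _ 1 [_; _]). simpl; lia.
      constructor. apply sub_ok.
    - lia.
    - intros m Hm. pose proof (T_mono (S m) w ltac:(lia)). lia. }
  eapply comp1; [|apply par_ok].
  eapply comp2. eapply comp2. eapply comp1. apply HW. apply tt_ok.
  eapply comp1. apply (const_ok _ 5). constructor. apply sub_ok. apply HW.
  replace (w - b) with (w - (c - T w)) by lia. apply sub_ok.
Qed.

Lemma kL_rep p : (forall k l, p k <> 0 -> p l <> 0 -> k = l) ->
  exists X Y, rep_prod rep_Rlt rep_Rgt (kL p) (X, Y) /\ (X < Y)%R /\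
   (forall j, p j <> 0 -> Nat.even j = true -> Y = (-1/2)%R) /\
   (forall j, p j <> 0 -> Nat.even j = false -> X = (1/2)%R).
Proof.
  intros U.
  assert (Ex : forall n, bfst (kL p) n = kL p (2 * n)) by reflexivity.
  assert (Ey : forall n, bsnd (kL p) n = kL p (2 * n + 1)) by reflexivity.
  unfold kL in *.
  destruct (classic (exists j, p j <> 0)) as [[j Hj]|N].
  - pose proof (ff_one p j Hj U) as F.
    destruct (Nat.even j) eqn:Ej.
    + exists (-1)%R, (-1/2)%R. split; [split|split; [lra|split]]; cbn [Nat.eqb Nat.pred fst snd].
      * split. intros n. rewrite Ex, even_double. cbn [Nat.eqb Nat.pred fst snd].
        destruct (le_lt_dec j (2 * n)).
        rewrite (proj2 (F _)) by auto. cbn [Nat.eqb Nat.pred fst snd]. rewrite qv_code1. lra.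
        rewrite (proj1 (F _)) by auto. cbn [Nat.eqb Nat.pred fst snd]. rewrite qv_code1. lra.
        intros eps He. exists 0. rewrite Ex, even_double. cbn [Nat.eqb Nat.pred fst snd].
        destruct (le_lt_dec j 0).
        rewrite (proj2 (F _)) by auto. cbn [Nat.eqb Nat.pred fst snd]. rewrite qv_code1. lra.
        rewrite (proj1 (F _)) by auto. cbn [Nat.eqb Nat.pred fst snd]. rewrite qv_code1. lra.
      * split. intros n. rewrite Ey, even_odd. cbn [Nat.eqb Nat.pred fst snd].
        destruct (le_lt_dec j (2 * n + 1)).
        rewrite (proj2 (F _)) by auto. cbn [Nat.eqb Nat.pred fst snd]. rewrite qv_code4. lra.
        rewrite (proj1 (F _)) by auto. cbn [Nat.eqb Nat.pred fst snd]. rewrite qv_code3. lra.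
        intros eps He. exists j. rewrite Ey, even_odd. cbn [Nat.eqb Nat.pred fst snd].
        rewrite (proj2 (F _)) by lia. cbn [Nat.eqb Nat.pred fst snd]. rewrite qv_code4. lra.
      * auto.
      * intros j' Hj' Ej'. rewrite (U j' j Hj' Hj) in Ej'. congruence.
    + exists (1/2)%R, 1%R. split; [split|split; [lra|split]]; cbn [Nat.eqb Nat.pred fst snd].
      * split. intros n. rewrite Ex, even_double. cbn [Nat.eqb Nat.pred fst snd].
        destruct (le_lt_dec j (2 * n)).
        rewrite (proj2 (F _)) by auto. cbn [Nat.eqb Nat.pred fst snd]. rewrite qv_code7. lra.
        rewrite (proj1 (F _)) by auto. cbn [Nat.eqb Nat.pred fst snd]. rewrite qv_code1. lra.
        intros eps He. exists j. rewrite Ex, even_double. cbn [Nat.eqb Nat.pred fst snd].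
        rewrite (proj2 (F _)) by lia. cbn [Nat.eqb Nat.pred fst snd]. rewrite qv_code7. lra.
      * split. intros n. rewrite Ey, even_odd. cbn [Nat.eqb Nat.pred fst snd].
        destruct (le_lt_dec j (2 * n + 1)).
        rewrite (proj2 (F _)) by auto. cbn [Nat.eqb Nat.pred fst snd]. rewrite qv_code3. lra.
        rewrite (proj1 (F _)) by auto. cbn [Nat.eqb Nat.pred fst snd]. rewrite qv_code3. lra.
        intros eps He. exists 0. rewrite Ey, even_odd. cbn [Nat.eqb Nat.pred fst snd].
        destruct (le_lt_dec j 1).
        rewrite (proj2 (F _)) by auto. cbn [Nat.eqb Nat.pred fst snd]. rewrite qv_code3. lra.
        rewrite (proj1 (F _)) by auto. cbn [Nat.eqb Nat.pred fst snd]. rewrite qv_code3. lra.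
      * intros j' Hj' Ej'. rewrite (U j' j Hj' Hj) in Ej'. congruence.
      * auto.
  - assert (Z : forall j, p j = 0) by (intros j; apply NNPP; intros E; apply N; eauto).
    exists (-1)%R, 1%R. split; [split|split; [lra|split]]; cbn [Nat.eqb Nat.pred fst snd].
    + split. intros n. rewrite Ex, even_double, ff_allzero by auto. cbn [Nat.eqb Nat.pred fst snd]. rewrite qv_code1. lra.
      intros eps He. exists 0. rewrite Ex, even_double, ff_allzero by auto. cbn [Nat.eqb Nat.pred fst snd]. rewrite qv_code1. lra.
    + split. intros n. rewrite Ey, even_odd, ff_allzero by auto. cbn [Nat.eqb Nat.pred fst snd]. rewrite qv_code3. lra.
      intros eps He. exists 0. rewrite Ey, even_odd, ff_allzero by auto. cbn [Nat.eqb Nat.pred fst snd]. rewrite qv_code3. lra.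
    + intros j Hj. exfalso; auto.
    + intros j Hj. exfalso; auto.
Qed.

Lemma LLPO_le_BIm : W_le rep_baire rep_nat LLPO (rep_prod rep_Rlt rep_Rgt) rep_R BIm.
Proof.
  exists HLP, KL. intros G HG p x Hp [y0 [Hu _]].
  assert (U : forall k l, p k <> 0 -> p l <> 0 -> k = l).
  { intros k l Hk Hl. apply Hu; rewrite <- Hp; auto. }
  destruct (kL_rep p U) as [X [Y [Hrep [Hxy [HE HO]]]]].
  destruct (HG (kL p) (X, Y) Hrep) as [q [Hq [z [Hz Hb]]]].
  exists X. unfold BIm. simpl. lra.
  unfold BIm in Hb. simpl in Hb.
  set (o := bpair p q).
  exists (fun _ => if Nat.even (fst (unpair (o 5))) then 0 else 1). split.
  - exists (kL p), q. split; [apply kl_ok|split; auto]. apply hl_ok.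
  - exists (if Nat.even (fst (unpair (o 5))) then 0 else 1). split. reflexivity.
    assert (E5 : o 5 = q 2) by reflexivity. rewrite E5.
    specialize (Hz 2). simpl in Hz. apply Rabs_le_inv' in Hz.
    destruct (unpair (q 2)) as [a b] eqn:Eu. simpl fst.
    destruct (qv_sign _ _ _ Eu) as [S1 S2].
    split; [exact Hu|].
    destruct (Nat.even a) eqn:Ea.
    + left. split; auto. specialize (S1 eq_refl). intros n. rewrite <- Hp.
      destruct (Nat.eq_dec (p (2 * n)) 0) as [e|e]; auto. exfalso.
      specialize (HE _ e (even_double n)). lra.
    + right. split; auto. specialize (S2 eq_refl). intros n. rewrite <- Hp.
      destruct (Nat.eq_dec (p (2 * n + 1)) 0) as [e|e]; auto. exfalso.
      specialize (HO _ e (even_odd n)). lra.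
Qed.


Theorem proposition4p5 :
  W_lt rep_baire rep_nat LPO rep_Rlt rep_R BF /\
  W_lt rep_baire rep_nat LLPO (rep_prod rep_Rlt rep_Rgt) rep_R BIm.
Proof.
  split; split.
  - exact LPO_le_BF.
  - exact BF_not_le_LPO.
  - exact LLPO_le_BIm.
  - exact BIm_not_le_LLPO.
Qed.
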